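(* Let $R$ be an integral domain, $f \in R[X]$ a monic polynomial, and $f = \prod_{i=1}^n f_i$ a factorisation of $f$ into monic polynomials $f_i \in R[X]$. Let $\Psi_f : R[X]/(f) \to \bigoplus_{i=1}^n R[X]/(f_i)$ be the natural map $h \bmod f \mapsto \bigoplus_i h \bmod f_i$. Then the determinant of $\Psi_f$ written with respect to the standard bases is \[\det(\Psi_f) = \prod_{1 \le i < j \le n}\mathcal{R}(f_j, f_i).\]
   Context: The standard basis of $R[X]/(g)$ for monic $g$ of degree $d$ is $(1, \overline{X}, \dots, \overline{X}^{d-1})$; the summands of $\bigoplus_{i=1}^n R[X]/(f_i)$ are taken in the order $i = 1, \dots, n$. For monic polynomials $g,h$, the resultant is $\mathcal{R}(g,h) = \prod_{\alpha}\prod_{\beta}(\alpha-\beta)$, the product over the roots $\alpha$ of $g$ and $\beta$ of $h$ (with multiplicity) in an algebraic closure of the fraction field of $R$; it lies in $R$. *)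

(* Defs.v *)
From HB Require Import structures.
From mathcomp Require Import all_boot all_order all_algebra.
Set Implicit Arguments. Unset Strict Implicit. Unset Printing Implicit Defensive.
Import Order.TTheory GRing.Theory Num.Theory.
Local Open Scope ring_scope.

(* The paper's resultant R(g,h) = prod_{g(alpha)=0} prod_{h(beta)=0} (alpha - beta)
   for monic g, h.  MathComp's [resultant p q] is det of its Sylvester matrix
   whose rows are the coefficient vectors (in INCREASING degree order) of
   X^k p and X^k q; this equals (-1)^(deg p * deg q) times the classical
   Sylvester resultant, i.e. for monic p, q it equals prod (beta - alpha)
   = R(q, p) in the paper's notation. *)
Definition paper_resultant (R : nzRingType) (g h : {poly R}) : R := resultant h g.

(* Row k (k < N := sum_i deg f_i = deg f) is the image of the basis vector
   X^k mod f; its entries, grouped in blocks i = 0..n-1 (in this order), are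
   the coefficients of X^0, ..., X^(deg f_i - 1) of (X^k mod f) mod f_i.
   (This is the transpose of the column convention; the determinant is the same.) *)
Definition Psi_mx (R : idomainType) (n : nat) (f : {poly R}) (F : 'I_n -> {poly R})
  : 'M[R]_(\sum_(i < n) (size (F i)).-1) :=
  \mxrow_(i < n)
    (\matrix_(k < \sum_(i < n) (size (F i)).-1, l < (size (F i)).-1)
       ((('X^k %% f) %% F i)`_l)).

(* Main.v *)
Require Import Defs.
From HB Require Import structures.
From mathcomp Require Import all_boot all_order all_algebra.
From mathcomp Require Import zify.
Import GRing.Theory.
Local Open Scope ring_scope.

Lemma det_cast (R : comNzRingType) n m (e : n = m) (A : 'M[R]_n) :
  \det (castmx (e, e) A) = \det A.
Proof. by case: m / e; rewrite castmx_id. Qed.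

Lemma det_mxblock_utrig (R : comNzRingType) (p : nat) (p_ : 'I_p -> nat)
   (B : forall i j, 'M[R]_(p_ i, p_ j)) :
  (forall i j : 'I_p, (j < i)%N -> B i j = 0) ->
  \det (\mxblock_(i, j) B i j) = \prod_(i < p) \det (B i i).
Proof.
elim: p p_ B => [|p IH] p_ B Hz.
  rewrite big_ord0.
  move: (\mxblock_(i, j) B i j); rewrite big_ord0 => A; exact: det_mx00.
rewrite mxblock_recul det_cast.
have -> : \mxcol_i B (lift ord0 i) ord0 = 0.
  rewrite -(mxcol0 (p_ := fun i => p_ (lift ord0 i))); apply: eq_mxcol => i.
  by apply: Hz.
rewrite det_ublock big_ord_recl; congr (_ * _).
by apply: IH => i j lt; apply: Hz.
Qed.

Section Aux.
Context {R : idomainType}.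
Implicit Types h g a b : {poly R}.

Lemma poly_expand (r : {poly R}) d : (size r <= d)%N ->
  r = \sum_(m < d) r`_m *: 'X^m.
Proof.
move=> H; rewrite -poly_def; apply/polyP => i; rewrite coef_poly.
by case: ltnP => // Hi; rewrite nth_default // (leq_trans H Hi).
Qed.

Lemma monic_ulc {h} : h \is monic -> lead_coef h \in GRing.unit.
Proof. by move/monicP => ->; exact: unitr1. Qed.

Lemma modp_lin h d (c : 'I_d -> R) (q : 'I_d -> {poly R}) : h \is monic ->
  (\sum_(i < d) c i *: q i) %% h = \sum_(i < d) c i *: (q i %% h).
Proof.
move=> hm; have u := monic_ulc hm.
elim/big_rec2: _ => [|i x y _ <-]; first by rewrite mod0p.
by rewrite Pdiv.IdomainUnit.modpD // Pdiv.IdomainUnit.modpZl.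
Qed.

Lemma monic_size_gt0 {h} : h \is monic -> (0 < size h)%N.
Proof. by move=> hm; rewrite lt0n size_poly_eq0 monic_neq0. Qed.

Definition Nm h g : 'M[R]_((size h).-1) := \matrix_(k, l) (('X^k * g) %% h)`_l.

Lemma size_modp_le h (p : {poly R}) : h \is monic -> leq (size (p %% h)) (size h).-1.
Proof.
move=> hm; have h0 : h != 0 by apply: monic_neq0.
rewrite -ltnS prednK ?ltn_modpN0 //.
by rewrite lt0n size_poly_eq0.
Qed.

Lemma Nm_mul h a b : h \is monic -> Nm h (a * b) = Nm h a *m Nm h b.
Proof.
move=> hm; have u := monic_ulc hm.
apply/matrixP => k l; rewrite !mxE.
set r := ('X^k * a) %% h.
have -> : 'X^k * (a * b) = ('X^k * a) * b by rewrite mulrA.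
have -> : ('X^k * a * b) %% h = (r * b) %% h.
  by rewrite [_ * b]mulrC -Pdiv.IdomainUnit.modp_mul // mulrC.
have Hr : r = \sum_(m < (size h).-1) r`_m *: 'X^m by apply: poly_expand; apply: size_modp_le.
rewrite {1}Hr mulr_suml.
under eq_bigr do rewrite -scalerAl.
rewrite modp_lin // coef_sum; apply: eq_bigr => m _.
by rewrite coefZ !mxE.
Qed.

Lemma Nm1 h : h \is monic -> Nm h 1 = 1%:M.
Proof.
move=> hm; apply/matrixP => k l; rewrite !mxE mulr1 modp_small.
  by rewrite coefXn eq_sym.
by rewrite size_polyXn -ltn_predRL.
Qed.

Lemma size_XnM (g : {poly R}) k : g \is monic -> size ('X^k * g) = (k + size g)%N.
Proof.
move=> gm; rewrite size_monicM ?monicXn ?monic_neq0 // size_polyXn.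
by rewrite addSn.
Qed.

Lemma resultant_Nm g h : g \is monic -> h \is monic ->
  resultant g h = \det (Nm h g).
Proof.
move=> gm hm; have u := monic_ulc hm.
have h0 : h != 0 by apply: monic_neq0.
have g0 : g != 0 by apply: monic_neq0.
have sg := monic_size_gt0 gm; have sh := monic_size_gt0 hm.
set dh := (size h).-1; set dg := (size g).-1.
pose C : 'M[R]_(dh, dg) := \matrix_(k, j) (('X^k * g) %/ h)`_j.
pose A' : 'M[R]_(dh, dh + dg) := row_mx (Nm h g) 0.
pose D := dsubmx (Sylvester_mx g h).
have HS : Sylvester_mx g h = block_mx 1%:M C 0 1%:M *m col_mx A' D.
  rewrite mul_block_col !mul1mx mul0mx add0r.
  rewrite -{1}[Sylvester_mx g h]vsubmxK; congr col_mx.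
  rewrite /D /Sylvester_mx col_mxKu col_mxKd.
  apply/row_matrixP => k.
  rewrite rowE mul_rV_lin1 /= rVpoly_delta.
rewrite [row k (_ + _)]linearD /= row_mul.
  have -> : row k C = poly_rV (('X^k * g) %/ h).
    by apply/rowP => j; rewrite !mxE.
  rewrite mul_rV_lin1 /= poly_rV_K; last first.
    rewrite size_divp // size_XnM //.
    have := ltn_ord k; rewrite /dh /dg; move: (nat_of_ord k) => kk; rewrite -!subn1; lia.
  rewrite /A'.
  have -> : row k (row_mx (Nm h g) (0 : 'M_(dh, dg))) = poly_rV (('X^k * g) %% h).
    apply/rowP => j; rewrite !mxE; case: splitP => j' ->; rewrite ?mxE //.
    rewrite nth_default //; exact: leq_trans (size_modp_le _ _ hm) (leq_addr _ _).
  rewrite -raddfD /= addrC -Pdiv.IdomainUnit.divp_eq //.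
rewrite /resultant HS det_mulmx det_ublock !det1 !mul1r.
rewrite -[D]hsubmxK -block_mxEv det_lblock /D /Sylvester_mx col_mxKd.
rewrite [\det (rsubmx _)]det_trig.
  rewrite big1 ?mulr1 // => i _.
  rewrite !mxE /= rVpoly_delta /= coefXnM.
  rewrite ltnNge leq_addl /= addnK.
  by have := monicP hm; rewrite /lead_coef.
apply/is_trig_mxP => i j lt_ij.
rewrite !mxE /= rVpoly_delta /= coefXnM.
case: ifP => // _; rewrite nth_default //.
move: sh lt_ij; move: (nat_of_ord j) (nat_of_ord i) (size h) => jj ii sz; rewrite -!subn1; lia.
Qed.

Lemma size_prod_monic (I : eqType) (r : seq I) (Q : pred I) (G : I -> {poly R}) :
  (forall i, G i \is monic) ->
  size (\prod_(i <- r | Q i) G i) = (\sum_(i <- r | Q i) (size (G i)).-1).+1.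
Proof.
move=> Gm; elim/big_rec2: _ => [|i x y _ Hy]; first by rewrite size_poly1.
have y0 : y != 0 by rewrite -size_poly_eq0 Hy.
rewrite size_monicM // Hy; have := monic_size_gt0 (Gm i).
by move: (size (G i)) => s s0; rewrite addnS /= -subn1 -addn1; lia.
Qed.

Lemma sum_sub_le (n : nat) (p_ : 'I_n -> nat) (Q : pred 'I_n) :
  (\sum_(k < n | Q k) p_ k <= \sum_(k < n) p_ k)%N.
Proof.
rewrite big_mkcond /=; apply: leq_sum => k _; case: (Q k) => //.
Qed.
End Aux.

Theorem theoremA3 (R : idomainType) (n : nat) (f : {poly R}) (F : 'I_n -> {poly R}) :
  f \is monic ->
  (forall i, F i \is monic) ->
  f = \prod_(i < n) F i ->
  \det (Psi_mx f F) =
    \prod_(i < n) \prod_(j < n | (i < j)%N) paper_resultant (F j) (F i).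
Proof.
move=> fm Fm fE.
pose p_ := fun i : 'I_n => (size (F i)).-1.
pose N := (\sum_(i < n) p_ i)%N.
pose P := fun i : 'I_n => \prod_(k < n | (k < i)%N) F k.
pose Ds := fun i : 'I_n => (\sum_(k < n | (k < i)%N) p_ k)%N.
have sP : forall i, size (P i) = (Ds i).+1 by move=> i; apply: size_prod_monic.
have mP : forall i, P i \is monic by move=> i; apply: monic_prod => k _.
have sf : size f = N.+1 by rewrite fE; apply: size_prod_monic.
have DsN : forall i, (Ds i + p_ i <= N)%N.
  move=> i; rewrite /N (bigD1 i) //= [(p_ i + _)%N]addnC leq_add2r /Ds.
  rewrite big_mkcond [X in (_ <= X)%N]big_mkcond /=.
  apply: leq_sum => k _; case: ifP => // H.
  by rewrite -(inj_eq val_inj) /= neq_ltn H.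
pose T : 'M[R]_(N, N) := \mxcol_i (\matrix_(l < p_ i, t < N) (P i * 'X^l)`_t).
have detT : \det T = 1.
  rewrite det_trig; last first.
    apply/is_trig_mxP => s t lt_st; rewrite /T !mxE coefMXn.
    case: ifP => // _; rewrite nth_default // sP.
    have := tagnat.rect s; rewrite -/(Ds _) => sE.
    move: lt_st; rewrite sE.
    move: (nat_of_ord t) (nat_of_ord (tagnat.sig2 s)) (Ds _) => tt ll dd; lia.
  apply: big1 => s _; rewrite /T !mxE coefMXn.
  have := tagnat.rect s; rewrite -/(Ds _) => sE.
  rewrite {1 2}sE ltnNge leq_addl /= addnK.
  have := monicP (mP (tagnat.sig1 s)); rewrite /lead_coef sP /=.
  by [].
have TM : forall i j,
  (\matrix_(l < p_ i, t < N) (P i * 'X^l)`_t) *m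
  (\matrix_(k < N, l' < p_ j) (('X^k %% f) %% F j)`_l') =
  \matrix_(l, l') ((P i * 'X^l) %% F j)`_l'.
  move=> i j; apply/matrixP => l l'; rewrite !mxE.
  have sg : (size (P i * 'X^l)%R <= N)%N.
    rewrite size_Mmonic ?monicXn ?monic_neq0 // sP size_polyXn.
    have := DsN i; have := ltn_ord l.
    move: (nat_of_ord l) => ll; move: (Ds i) (p_ i) => dd pp; lia.
  rewrite [in RHS](poly_expand _ _ sg) modp_lin // coef_sum.
  apply: eq_bigr => t _; rewrite !mxE coefZ [('X^t %% f)]modp_small //.
  by rewrite size_polyXn sf ltnS.
have Pdvd : forall i j : 'I_n, (j < i)%N -> forall l : nat, (P i * 'X^l) %% F j = 0.
  move=> i j ji l; rewrite /P (bigD1 j) //= -mulrA mulrC.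
  exact: modp_mull.
have -> : \det (Psi_mx f F) = \det (T *m Psi_mx f F) by rewrite det_mulmx detT mul1r.
rewrite /Psi_mx /T mul_mxcol_mxrow.
rewrite det_mxblock_utrig; last first.
  move=> i j ji; rewrite TM; apply/matrixP => l l'; rewrite !mxE Pdvd //.
  by rewrite coef0.
have E1 : forall i, \det (\matrix_(l < p_ i, l' < p_ i) ((P i * 'X^l) %% F i)`_l') =
    \prod_(k < n | (k < i)%N) resultant (F k) (F i).
  move=> i.
  have -> : \matrix_(l < p_ i, l' < p_ i) ((P i * 'X^l) %% F i)`_l' = Nm (F i) (P i).
    by apply/matrixP => l l'; rewrite !mxE mulrC.
  have hm : {morph (fun g => \det (Nm (F i) g)) : a b / a * b >-> a * b}.
    by move=> a b /=; rewrite Nm_mul // det_mulmx.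
  rewrite /P (big_morph _ hm (id1 := 1)); last by rewrite /= Nm1 // det1.
  by apply: eq_bigr => k _; rewrite -resultant_Nm.
under eq_bigr do rewrite TM E1.
rewrite /paper_resultant.
rewrite (eq_bigr (fun i : 'I_n => \prod_(j < n) (if (j < i)%N then resultant (F j) (F i) else 1))); last first.
  by move=> i _; rewrite big_mkcond.
rewrite exchange_big /=; apply: eq_bigr => i _.
by rewrite [RHS]big_mkcond.
Qed.
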